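(* Let $X$ be a Polish space, $n\ge1$, $\mu\in\mathcal M_f(X)$ with $\mu(X)=n$, and let ${\mathbf T}$ be a thinning kernel of type 1 with normalization $Z$. Then for every non-negative measurable function $\phi$ on $\mathcal M_f(X)$, $${\mathbf T}_\mu\big(\phi\,1_{\{\zeta_X=n-1\}}\big)=\int\frac{Z_\mu}{Z_{\mu-\delta_x}}\,{\mathbf T}_{\mu-\delta_x}\big(\phi\,1_{\{\zeta_X=n-1\}}\big)\,\mu(\mathrm dx).$$
   Context: $\mathcal M_f(X)$ denotes the set of finite counting measures on $X$. For $\mu\in\mathcal M_f(X)$ with an atom at $x$, $\mu-\delta_x$ is $\mu$ with one atom at $x$ removed. $\zeta_X(\eta)=\eta(X)$ is the total number of points. $\mu^{-[n]}$ is the $n$-th falling factorial measure of $\mu$, defined by $\int g\,\mathrm d\mu^{-[n]}=\int\cdots\int g(x_1,\dots,x_n)(\mu-\delta_{x_1}-\dots-\delta_{x_{n-1}})(\mathrm dx_n)\cdots\mu(\mathrm dx_1)$. Write $\delta_{\mathbf x}=\delta_{x_1}+\dots+\delta_{x_n}$. A thinning kernel of type 1 is a stochastic kernel of the form ${\mathbf T}_\mu(\phi)=Z_\mu\sum_{m\ge0}\frac1{m!}\int\phi(\delta_{\mathbf x})\,t({\mathbf x})\,\mu^{-[m]}(\mathrm d{\mathbf x})$. Here $t\ge0$ is a symmetric measurable function on $\bigcup_mX^m$ (for $m=0$ a non-negative number) not depending on $\mu$, and $Z_\mu^{-1}=\sum_m\frac1{m!}\int t\,\mathrm d\mu^{-[m]}\in(0,\infty)$.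 *)

(* Defs.v *)
From HB Require Import structures.
From mathcomp Require Import all_boot all_order all_algebra.
From mathcomp Require Import all_classical all_reals.
From mathcomp Require Import ereal sequences.
From Stdlib Require Export Permutation.

Set Implicit Arguments.
Unset Strict Implicit.
Unset Printing Implicit Defensive.

Import Order.TTheory GRing.Theory Num.Theory.
Local Open Scope ring_scope.
Local Open Scope ereal_scope.

(* A finite counting measure on X is represented by the list of its atoms,
   repeated according to multiplicity; two lists represent the same measure
   iff they are permutations of each other.  [delta_x1 + ... + delta_xm] is
   thus represented by [x1; ...; xm], and zeta_X(eta) = size eta. *)

Fixpoint picks (X : Type) (s : seq X) : seq (X * seq X) :=
  match s with
  | [::] => [::]
  | x :: s' => (x, s') :: [seq (p.1, x :: p.2) | p <- picks s']
  end.

(* Integral against the n-th falling factorial measure mu^{-[n]}, defined by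
   the iterated integral of the paper:
   int g dmu^{-[m]} = int ... int g(x1,..,xm)
        (mu - d_x1 - ... - d_x(m-1))(dx_m) ... mu(dx_1),
   where integration against a counting measure is the sum over its atoms. *)
Fixpoint ffint (R : realType) (X : Type) (m : nat) (mu : seq X)
    (g : seq X -> \bar R) : \bar R :=
  match m with
  | 0 => g [::]
  | m'.+1 => \sum_(p <- picks mu) ffint m' p.2 (fun xs => g (p.1 :: xs))
  end.

Definition Zinv (R : realType) (X : Type) (t : seq X -> R) (mu : seq X)
  : \bar R :=
  \sum_(0 <= m <oo) ((m`!%:R)^-1)%:E * ffint m mu (fun xs => (t xs)%:E).

Definition Znorm (R : realType) (X : Type) (t : seq X -> R) (mu : seq X) : R :=
  (fine (Zinv t mu))^-1.

Definition Tker (R : realType) (X : Type) (t : seq X -> R) (mu : seq X)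
    (phi : seq X -> \bar R) : \bar R :=
  (Znorm t mu)%:E *
  \sum_(0 <= m <oo) ((m`!%:R)^-1)%:E * ffint m mu (fun xs => phi xs * (t xs)%:E).

Definition ind_zeta (R : realType) (X : Type) (k : nat) (eta : seq X) : \bar R :=
  ((size eta == k)%:R)%:E.

(* Main.v *)
Require Import Defs.
From HB Require Import structures.
From mathcomp Require Import all_boot all_order all_algebra.
From mathcomp Require Import all_classical all_reals.
From mathcomp Require Import ereal sequences.
From Stdlib Require Import Permutation.
Import Order.TTheory GRing.Theory Num.Theory.
Local Open Scope ring_scope.
Local Open Scope ereal_scope.

Section H.
Variable R : realType.
Variable X : Type.

Lemma series_single (f : nat -> \bar R) K :
  (forall k, 0 <= f k) -> (forall k, k != K -> f k = 0) ->
  \sum_(0 <= k <oo) f k = f K.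
Proof.
move=> f0 fK.
rewrite (nneseries_split 0 K.+1) //= add0n.
rewrite (eseries0 (P := xpredT)) ?adde0; last first.
  by move=> i Hi _; apply: fK; rewrite neq_ltn Hi orbT.
rewrite big_nat_recr //= big1_seq ?add0e // => i /andP[_]; rewrite mem_index_iota.
by move=> /andP[_ Hi]; apply: fK; rewrite neq_ltn Hi.
Qed.

Lemma swap_picks (mu : seq X) (F : X -> X -> seq X -> \bar R) :
  \sum_(p <- picks mu) \sum_(q <- picks p.2) F p.1 q.1 q.2 =
  \sum_(p <- picks mu) \sum_(q <- picks p.2) F q.1 p.1 q.2.
Proof.
elim: mu F => [|x s IH] F /=; first by rewrite !big_nil.
rewrite !big_cons /= !big_map /=.
have E : forall (G : X * seq X -> \bar R) (r : seq X),
  \sum_(q <- (x, r) :: [seq (p.1, x :: p.2) | p <- picks r]) G q =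
  G (x, r) + \sum_(q <- picks r) G (q.1, x :: q.2).
  by move=> G r; rewrite big_cons big_map.
rewrite (eq_bigr _ (fun j _ => E (fun q => F j.1 q.1 q.2) j.2)).
rewrite [in RHS](eq_bigr _ (fun j _ => E (fun q => F q.1 j.1 q.2) j.2)) /=.
rewrite !big_split /=.
rewrite (IH (fun a b r => F a b (x :: r))).
rewrite !addeA; congr (_ + _); rewrite addeC; done.
Qed.

Lemma In_picks (mu : seq X) p : List.In p (picks mu) -> size p.2 = (size mu).-1.
Proof.
elim: mu p => [|x s IH] p //= [<-//|].
move=> /List.in_map_iff [q [<- Hq]] /=; rewrite (IH _ Hq).
by case: s IH Hq => //.
Qed.

Lemma eq_big_In (I : Type) (s : seq I) (F G : I -> \bar R) :
  (forall i, List.In i s -> F i = G i) -> \sum_(i <- s) F i = \sum_(i <- s) G i.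
Proof.
elim: s => [|a s IH] H; first by rewrite !big_nil.
rewrite !big_cons H /=; last by left.
by rewrite IH // => i Hi; apply: H; right.
Qed.

Lemma sum_picks_ffint k (mu : seq X) (g : seq X -> \bar R) :
  \sum_(p <- picks mu) ffint k p.2 g = (ffint k mu g *+ (size mu - k))%R.
Proof.
elim: k mu g => [|k IH] mu g /=.
  rewrite subn0; elim: mu => [|x s IHs] /=; first by rewrite big_nil.
  by rewrite big_cons big_map IHs mulrS.
rewrite (swap_picks mu (fun a b r => ffint k r (fun xs => g (b :: xs)))) /=.
rewrite -sumrMnl; apply: eq_big_In => p Hp.
by rewrite IH (In_picks _ _ Hp) subnS -subn1 subnAC subn1.
Qed.

Lemma ffint_ext m (mu : seq X) (g g' : seq X -> \bar R) :
  (forall xs, size xs = m -> g xs = g' xs) -> ffint m mu g = ffint m mu g'.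
Proof.
elim: m mu g g' => [|m IH] mu g g' H /=; first by apply: H.
apply: eq_bigr => p _; apply: IH => xs Hx; apply: H => /=; by rewrite Hx.
Qed.

Lemma ffint0 m (mu : seq X) : ffint m mu (fun _ => 0 : \bar R) = 0.
Proof.
elim: m mu => [|m IH] mu //=; by rewrite big1.
Qed.

Lemma ffint_ge0 m (mu : seq X) (g : seq X -> \bar R) :
  (forall xs, 0 <= g xs) -> 0 <= ffint m mu g.
Proof.
elim: m mu g => [|m IH] mu g H //=; by apply: sume_ge0 => p _; apply: IH.
Qed.
End H.

Theorem mainTheorem6 (R : realType) (X : Type) (t : seq X -> R)
    (t_ge0 : forall xs, (0 <= t xs)%R)
    (t_sym : forall xs ys, Permutation xs ys -> t xs = t ys)
    (Zinv_pos_fin : forall eta : seq X, 0 < Zinv t eta < +oo)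
    (n : nat) (n_ge1 : (1 <= n)%N) (mu : seq X) (mu_n : size mu = n)
    (phi : seq X -> \bar R)
    (phi_ge0 : forall eta, 0 <= phi eta)
    (phi_wd : forall eta eta', Permutation eta eta' -> phi eta = phi eta') :
  Tker t mu (fun eta => phi eta * ind_zeta R n.-1 eta) =
  \sum_(p <- picks mu)
    ((Znorm t mu / Znorm t p.2)%:E *
     Tker t p.2 (fun eta => phi eta * ind_zeta R n.-1 eta)).
Proof.
set G := fun xs => phi xs * ind_zeta R n.-1 xs * (t xs)%:E.
have G0 : forall xs, 0 <= G xs.
  move=> xs; rewrite /G; apply: mule_ge0; last by rewrite lee_fin.
  by apply: mule_ge0 => //; rewrite /ind_zeta lee_fin.
pose c : \bar R := (((n.-1)`!%:R)^-1)%:E.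
have c0 : 0 <= c by rewrite /c lee_fin invr_ge0.
have TS : forall eta, Tker t eta (fun eta => phi eta * ind_zeta R n.-1 eta) =
    (Znorm t eta)%:E * (c * ffint n.-1 eta G).
  move=> eta; rewrite /Tker; congr (_ * _).
  apply: (@series_single R _ n.-1).
    move=> k; apply: mule_ge0; first by rewrite lee_fin invr_ge0.
    exact: ffint_ge0.
  move=> k Hk; rewrite (@ffint_ext R X k eta _ (fun _ => 0)) ?ffint0 ?mule0 //.
  move=> xs Hxs; rewrite /ind_zeta Hxs (negbTE Hk) /= mule0 mul0e //.
have Zne : forall eta, Znorm t eta != 0%R.
  by move=> eta; rewrite /Znorm invr_eq0 gt_eqF // fine_gt0.
rewrite TS.
transitivity (\sum_(p <- picks mu) ((Znorm t mu)%:E * (c * ffint n.-1 p.2 G))); last first.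
  apply: eq_bigr => p _; by rewrite TS [RHS]muleA -EFinM divfK.
rewrite -[RHS](@ge0_sume_distrr R _ (picks mu) _ xpredT (fun p => c * ffint n.-1 p.2 G)); last first.
  by move=> p _; apply: mule_ge0 => //; exact: ffint_ge0.
rewrite -(@ge0_sume_distrr R _ (picks mu) _ xpredT (fun p => ffint n.-1 p.2 G)); last first.
  by move=> p _; exact: ffint_ge0.
rewrite sum_picks_ffint mu_n. have -> : (n - n.-1 = 1)%N by clear -n_ge1; case: n n_ge1 => // m _; rewrite subSn // subnn.
by rewrite mulr1n.
Qed.
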